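(* Let $G$ be a bicyclic graph with diameter $3$. Then $G$ is group vertex magic if and only if $G$ is isomorphic to $M_{11}(0,0)$, the graph on vertices $v_1,\dots,v_7$ consisting of the $5$-cycle $v_1v_2v_3v_4v_5v_1$ and the triangle $v_1v_6v_7$ (i.e. a $C_5$ and a $C_3$ sharing exactly one vertex, with no further vertices or edges).
   Context: All graphs are finite, simple and undirected. A bicyclic graph is a connected graph with $|E(G)|=|V(G)|+1$. For an additive abelian group $\mathcal{A}$ with identity $0$, a map $\ell:V(G)\to\mathcal{A}\setminus\{0\}$ is an $\mathcal{A}$-vertex magic labeling if there is $\mu\in\mathcal{A}$ with $\omega(v)=\sum_{u\in N(v)}\ell(u)=\mu$ for every vertex $v$ (where $N(v)$ is the set of neighbours of $v$); $G$ is $\mathcal{A}$-vertex magic if it admits such a labeling, and $G$ is group vertex magic if it is $\mathcal{A}$-vertex magic for every nontrivial abelian group $\mathcal{A}$. *)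

(* Defs.v *)
From mathcomp Require Import all_boot all_order all_algebra.
Set Implicit Arguments. Unset Strict Implicit. Unset Printing Implicit Defensive.
Import GRing.Theory.
Local Open Scope ring_scope.

Definition simple_graph (T : finType) (e : rel T) : Prop :=
  symmetric e /\ irreflexive e.

Definition edge_set (T : finType) (e : rel T) : {set {set T}} :=
  [set [set x; y] | x in T, y in T & e x y].

Definition connected_graph (T : finType) (e : rel T) : Prop :=
  forall x y : T, connect e x y.

Definition bicyclic (T : finType) (e : rel T) : Prop :=
  connected_graph e /\ #|edge_set e| = (#|T| + 1)%N.

Fixpoint within (T : finType) (e : rel T) (k : nat) (x y : T) : bool :=
  match k with
  | 0%N => x == y
  | k'.+1 => (x == y) || [exists z, e x z && within e k' z y]
  end.

(* diameter = d (for a connected graph): every pair at distance <= d and some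
   pair at distance exactly d (i.e. not <= d-1). *)
Definition diameter_eq (T : finType) (e : rel T) (d : nat) : Prop :=
  (forall x y : T, within e d x y) /\
  (exists x y : T, ~~ within e d.-1 x y).

Definition vertex_magic_labeling (A : zmodType) (T : finType) (e : rel T)
    (l : T -> A) : Prop :=
  (forall v, l v != 0) /\
  exists mu : A, forall v : T, \sum_(u | e v u) l u = mu.

Definition A_vertex_magic (A : zmodType) (T : finType) (e : rel T) : Prop :=
  exists l : T -> A, vertex_magic_labeling e l.

Definition group_vertex_magic (T : finType) (e : rel T) : Prop :=
  forall A : zmodType, (exists a : A, a != 0) -> A_vertex_magic A e.

(* M_11(0,0) on 'I_7 (v_i is vertex i-1): 5-cycle 0-1-2-3-4-0 and
   triangle 0-5-6-0. *)
Definition M11_edges : seq (nat * nat) :=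
  [:: (0,1); (1,2); (2,3); (3,4); (4,0); (0,5); (5,6); (6,0)]%N.

Definition M11 : rel 'I_7 :=
  fun x y => ((nat_of_ord x, nat_of_ord y) \in M11_edges)
          || ((nat_of_ord y, nat_of_ord x) \in M11_edges).

Definition graph_iso (T U : finType) (e : rel T) (f : rel U) : Prop :=
  exists g : T -> U, bijective g /\ forall x y, f (g x) (g y) = e x y.

(* Main.v *)
Require Import Defs.
From mathcomp Require Import all_boot all_order all_algebra.
From Stdlib Require Import Lia.
From mathcomp Require Import zify.
Set Implicit Arguments. Unset Strict Implicit. Unset Printing Implicit Defensive.
Import GRing.Theory.

Section Basic.
Variables (T : finType) (e : rel T).
Hypothesis sym : symmetric e.
Hypothesis irr : irreflexive e.

Definition N x := [set y | e x y].
Definition deg x := #|N x|.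

Lemma set2_eqP (x y a b : T) : x != y ->
  ([set x; y] == [set a; b]) = ((x == a) && (y == b)) || ((x == b) && (y == a)).
Proof.
move=> xy; apply/eqP/idP.
  move=> E.
  have xa : x \in [set a; b] by rewrite -E !inE eqxx.
  have ya : y \in [set a; b] by rewrite -E !inE eqxx orbT.
  have ax : a \in [set x; y] by rewrite E !inE eqxx.
  have bx : b \in [set x; y] by rewrite E !inE eqxx orbT.
  move: xa ya ax bx xy; rewrite !inE => /orP[]/eqP-> /orP[]/eqP->; rewrite ?eqxx ?orbT //=.
by case/orP=> /andP[/eqP-> /eqP->] //; apply/setP=> z; rewrite !inE orbC.
Qed.

Lemma handshake : \sum_x deg x = 2 * #|edge_set e|.
Proof.
have -> : \sum_x deg x = \sum_(p : T * T | e p.1 p.2) 1.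
  transitivity (\sum_x \sum_y (if e x y then 1 else 0)).
    apply: eq_bigr => x _; rewrite /deg -sum1_card; rewrite big_mkcond /=.
    by apply: eq_bigr => y _; rewrite /N inE; case: (e x y).
  by rewrite pair_bigA [RHS]big_mkcond.
rewrite (partition_big (fun p => [set p.1; p.2]) (mem (edge_set e))) /=; last first.
  by case=> x y /= exy; apply/imset2P; apply: (@Imset2spec _ _ _ _ _ _ _ x y) => //; rewrite inE.
rewrite mulnC -sum_nat_const; apply: eq_bigr => E /imset2P[a b _].
rewrite inE => /andP[_ eab] ->.
rewrite sum1_card.
have ab : a != b by apply: contraTneq eab => ->; rewrite irr.
have -> : 2 = ((a, b) != (b, a)).+1 by rewrite xpair_eqE (negbTE ab).
rewrite -cards2; apply: eq_card => -[x y]; rewrite !inE /= !xpair_eqE.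
rewrite unfold_in /=; case exy: (e x y) => /=.
  rewrite set2_eqP //; by apply: contraTneq exy => ->; rewrite irr.
apply/esym/negbTE; apply/negP=> /orP[] /andP[/eqP xa /eqP yb]; subst.
  by rewrite eab in exy.
by rewrite sym eab in exy.
Qed.
End Basic.


Section P.
Local Open Scope ring_scope.
Variables (T : finType) (e : rel T).

Lemma sum_nbr_const (A : zmodType) (a : A) v :
  \sum_(u | e v u) a = a *+ deg e v.
Proof.
rewrite /deg -sumr_const; apply: eq_bigl => u; by rewrite /N inE.
Qed.

Lemma parity : group_vertex_magic e -> forall x y, odd (deg e x) = odd (deg e y).
Proof.
move=> G.
have [|l [nz [mu Hmu]]] := G 'Z_2; first by exists 1.
have l1 : forall v, l v = 1.
  by move=> v; move: (l v) (nz v) => -[[|[|//]] ?] //= _; exact/val_inj.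
have Hd : forall v, ((deg e v)%:R : 'Z_2) = mu.
  by move=> v; rewrite -(Hmu v) (eq_bigr (fun _ => 1)) ?sum_nbr_const // => u _; rewrite l1.
move=> x y; have := congr1 (@nat_of_ord _) (etrans (Hd x) (esym (Hd y))).
rewrite !val_Zp_nat // !modn2; by case: (odd _); case: (odd _).
Qed.
End P.

Section Rev.
Local Open Scope ring_scope.

Definition cj (j : 'I_7) : int := if (nat_of_ord j \in [:: 0; 1; 4]%N) then 1 else -1.

Lemma M11_sum0 (i : 'I_7) : \sum_(j | M11 i j) cj j = 0.
Proof.
rewrite big_mkcond /= !big_ord_recl big_ord0.
by case: i => -[|[|[|[|[|[|[|//]]]]]]] ?.
Qed.
Lemma rev_dir (T : finType) (e : rel T) : graph_iso e M11 -> group_vertex_magic e.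
Proof.
move=> [g [gb gE]] A [a a0].
exists (fun x => a *~ cj (g x)); split.
  by move=> v; rewrite /cj; case: ifP => _; rewrite ?mulr1z ?mulrN1z ?oppr_eq0.
exists 0 => v; rewrite -mulrz_sumr.
have H : \sum_(j | M11 (g v) j) cj j = \sum_(u | e v u) cj (g u).
  rewrite (reindex g) /=; last exact: onW_bij.
  by apply: eq_bigl => u; rewrite gE.
by rewrite -H M11_sum0 mulr0z.
Qed.

End Rev.


Section Sums.
Variables (T : finType) (f : T -> nat).

Lemma sum_sub (A : {set T}) : \sum_(x in A) f x <= \sum_x f x.
Proof. by rewrite [X in _ <= X](bigID (mem A)) /= leq_addr. Qed.

Lemma sum_lb (A : {set T}) k : (forall y, y \in A -> k <= f y) -> k * #|A| <= \sum_(y in A) f y.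
Proof.
move=> H; rewrite mulnC -sum_nat_const; exact: leq_sum.
Qed.

Lemma sum_set2 a b : a != b -> \sum_(x in [set a; b]) f x = f a + f b.
Proof. by move=> ab; rewrite big_setU1 ?inE // big_set1. Qed.

End Sums.

Lemma aux1 p q : 1 + (1 + (p + q)) <= 4 -> 0 < p -> 0 < q -> p = 1.
Proof. lia. Qed.

Section Comb.
Variables (T : finType) (F : T -> {set T}).
Hypothesis symF : forall x y, (y \in F x) = (x \in F y).
Hypothesis irrF : forall x, x \notin F x.
Let d x := #|F x|.
Hypothesis S4 : \sum_x d x = 4.
Hypothesis Hq : forall u v, odd (d u) -> odd (d v) -> u != v -> v \in F u.

Lemma dpos x y : y \in F x -> 0 < d y.
Proof. by move=> H; apply/card_gt0P; exists x; rewrite -symF. Qed.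

Lemma decomp w : d w + \sum_(y in F w) d y <= 4.
Proof.
rewrite -S4 -big_setU1 /=; first exact: sum_sub.
exact: irrF.
Qed.

Lemma dle2 w : d w <= 2.
Proof.
have := decomp w.
have : 1 * #|F w| <= \sum_(y in F w) d y by apply: sum_lb => y; exact: dpos.
rewrite mul1n -/(d w); lia.
Qed.

Lemma comb : False.
Proof.
case: (pickP (fun u => odd (d u))) => [u ou | none].
  have du1 : d u = 1 by move: (dle2 u) ou; case: (d u) => [|[|[|]]].
  have /cards1P[y Fu] : #|F u| == 1 by apply/eqP.
  have yFu : y \in F u by rewrite Fu set11.
  have uFy : u \in F y by rewrite -symF.
  have dy := dle2 y; have dy0 := dpos yFu.
  have yu : y != u by apply/eqP => E; move: (irrF u); rewrite -{1}E yFu.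
  move: dy dy0; case Edy : (d y) => [|[|[|//]]] // _ _.
  -
    have /cards1P[u' Fy] : #|F y| == 1 by apply/eqP.
    have uu' : u = u' by apply/set1P; rewrite -Fy.
    subst u'.
    case: (pickP (fun z => (z \notin [set u; y]) && (0 < d z))) => [z /andP[zn dz] | none2].
      have /card_gt0P[z' z'z] := dz.
      move: zn; rewrite !inE negb_or => /andP[zu zy].
      have z'u : z' != u by apply: contraNneq zy => E; subst z'; move: z'z; rewrite symF Fu inE.
      have z'y : z' != y by apply: contraNneq zu => E; subst z'; move: z'z; rewrite symF Fy inE.
      have z'z0 : z' != z by apply/eqP => E; move: (irrF z); rewrite -{1}E z'z.
      have := sum_sub d (u |: (y |: (z |: [set z']))).
      have n3 : z \notin [set z'] by rewrite inE eq_sym.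
      have n2 : y \notin z |: [set z'] by rewrite !inE negb_or !(eq_sym y) zy z'y.
      have n1 : u \notin y |: (z |: [set z']) by rewrite !inE !negb_or !(eq_sym u) zu z'u yu.
      rewrite S4 big_setU1 // big_setU1 // big_setU1 // big_set1 /=.
      rewrite du1 Edy.
      have dz'0 := dpos z'z.
      move=> H.
      have dz1 : d z = 1 by exact: (aux1 H dz dz'0).
      have := @Hq u z ou; rewrite dz1 => /(_ isT).
      by rewrite Fu inE (negbTE zy) (eq_sym u z) zu; move=> /(_ isT).
    have : \sum_x d x = 2.
      rewrite (bigID (mem [set u; y])) /= sum_set2 1?eq_sym // du1 Edy big1 //.
      move=> x xn; have := none2 x; rewrite xn /=; by case: (d x).
    by rewrite S4.
  -
    have /cards2P[p [q [pq Fy]]] : #|F y| == 2 by apply/eqP.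
    have : exists2 y2, y2 != u & F y = [set u; y2].
      move: uFy; rewrite Fy !inE => /orP[] /eqP E; subst.
        by exists q => //; rewrite eq_sym.
      by exists p => //; rewrite setUC.
    move=> [y2 y2u Fy2].
    have := decomp y; rewrite Fy2 sum_set2 1?eq_sym // Edy du1 => H.
    have y2F : y2 \in F y by rewrite Fy2 !inE eqxx orbT.
    have := dpos y2F => H2.
    have dy21 : d y2 = 1 by lia.
    have := @Hq u y2 ou; rewrite dy21 => /(_ isT).
    rewrite eq_sym y2u Fu inE => /(_ isT) /eqP E; subst y2.
    by rewrite (negbTE (irrF y)) in y2F.
case: (pickP (fun w => 0 < d w)) => [w dw | none2]; last first.
  by move: S4; rewrite big1 // => x _; have := none2 x; case: (d x).
have ev : forall x, ~~ odd (d x) by move=> x; rewrite none.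
have dw2 : d w = 2 by move: (dle2 w) dw (ev w); case: (d w) => [|[|[|]]].
have := decomp w.
have : 2 * #|F w| <= \sum_(y in F w) d y.
  apply: sum_lb => y yF; have := dpos yF; have := ev y; case: (d y) => [|[|]] //.
rewrite -/(d w) dw2; lia.
Qed.
End Comb.


Section Tree.
Variables (T : finType) (e : rel T).
Hypothesis sym : symmetric e.
Hypothesis irr : irreflexive e.
Variable s : T.
Hypothesis W2 : forall x, within e 2 s x.

Definition lev x : nat := if x == s then 0 else if e s x then 1 else 2.
Definition par x := if (x == s) || e s x then s else odflt s [pick u | e s u && e u x].

Lemma lev_le2 x : lev x <= 2.
Proof. by rewrite /lev; case: ifP => //; case: ifP. Qed.

Lemma lev0 x : (lev x == 0) = (x == s).
Proof. by rewrite /lev; case: ifP => //; case: ifP. Qed.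

Lemma par_s : par s = s.
Proof. by rewrite /par eqxx. Qed.

Lemma par_spec x : x != s -> e x (par x) /\ lev (par x) = (lev x).-1.
Proof.
move=> xs; rewrite /par /lev (negbTE xs) /=.
case sx: (e s x).
  by rewrite eqxx sym sx.
case: pickP => [u /andP[su ux] | none] /=.
  have us : u != s by apply: contraTneq su => ->; rewrite irr.
  by rewrite sym ux (negbTE us) su.
have := W2 x; rewrite /= (eq_sym s) (negbTE xs) /=.
case/existsP=> z /andP[sz /orP[/eqP zx | /existsP[z' /andP[zz' /eqP z'x]]]].
  by subst z; rewrite sz in sx.
by subst z'; have := none z; rewrite sz zz'.
Qed.

Definition ch x := #|[set y | e x y && (par y == x)]|.
Definition ntn x := [set y | e x y && (par x != y) && (par y != x)].

Lemma ntn_sym x y : (y \in ntn x) = (x \in ntn y).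
Proof. by rewrite !inE sym; case: (e y x); case: (par x == y); case: (par y == x). Qed.

Lemma ntn_irr x : x \notin ntn x.
Proof. by rewrite inE irr. Qed.

Lemma par_par x : x != s -> par (par x) != x.
Proof.
move=> xs; have [_ l1] := par_spec xs.
apply/eqP => E.
have ps : par x != s by apply: contraNneq xs => ps; rewrite -E ps par_s.
have [_ l2] := par_spec ps; rewrite E l1 in l2.
have : lev x != 0 by rewrite lev0.
move: l2; case: (lev x) => [|n] //=; lia.
Qed.

Lemma deg_split x : deg e x = (x != s) + ch x + #|ntn x|.
Proof.
rewrite /deg /N -(cardsID [set y | par x == y]).
have -> : #|[set y | e x y] :&: [set y | par x == y]| = (x != s).
  case: (eqVneq x s) => [->|xs] /=.
    apply/eqP; rewrite cards_eq0; apply/eqP/setP => y; rewrite !inE par_s.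
    by apply/negbTE; apply/negP => /andP[sy /eqP E]; subst y; rewrite irr in sy.
  have [xp _] := par_spec xs.
  apply/eqP/cards1P; exists (par x); apply/setP => y; rewrite !inE.
  by case: (eqVneq (par x) y) => [<-|]; rewrite ?xp ?andbT ?andbF // eq_sym.
rewrite -addnA; congr (_ + _).
rewrite -(cardsID [set y | par y == x]); congr (_ + _).
  apply: eq_card => y; rewrite !inE.
  case: (eqVneq (par y) x) => [E|]; rewrite ?andbT ?andbF //.
  case: (eqVneq (par x) y) => [E2|]; rewrite ?andbT //=.
  case: (eqVneq x s) => [xs|xs].
    by rewrite xs in E2 *; rewrite par_s in E2; rewrite -E2 irr.
  by have := par_par xs; rewrite E2 E eqxx.
apply: eq_card => y; rewrite !inE.
by case: (e x y); case: (par x == y); case: (par y == x).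
Qed.

Lemma sum_ch : \sum_x ch x = #|T|.-1.
Proof.
transitivity (\sum_x \sum_y (if e x y && (par y == x) then 1 else 0)).
  apply: eq_bigr => x _; rewrite /ch -sum1_card big_mkcond /=.
  by apply: eq_bigr => y _; rewrite inE.
rewrite exchange_big /=.
transitivity (\sum_y (if y != s then 1 else 0)); last first.
  by rewrite -big_mkcond /= sum1_card cardC1.
apply: eq_bigr => y _.
rewrite (bigD1 (par y)) //= eqxx andbT big1 ?addn0; last first.
  by move=> x /negbTE xp; rewrite eq_sym xp andbF.
case: (eqVneq y s) => [->|ys] /=; first by rewrite par_s irr.
by have [yp _] := par_spec ys; rewrite sym yp.
Qed.

Lemma sum_ntn : \sum_x deg e x = 2 * (#|T| + 1) -> \sum_x #|ntn x| = 4.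
Proof.
move=> H.
have : \sum_x deg e x = \sum_x (x != s : nat) + \sum_x ch x + \sum_x #|ntn x|.
  by rewrite -!big_split /=; apply: eq_bigr => x _; rewrite deg_split.
rewrite sum_ch H.
have -> : \sum_x (x != s : nat) = #|T|.-1.
  by rewrite -(cardC1 s) -sum1_card [RHS]big_mkcond /=; apply: eq_bigr => x _; rewrite !inE; case: (x != s).
have : 0 < #|T| by apply/card_gt0P; exists s.
lia.
Qed.

Lemma ntn_s : ntn s = set0.
Proof.
apply/setP => y; rewrite !inE par_s.
case sy: (e s y) => //=.
by rewrite /par sy orbT eqxx andbF.
Qed.

Lemma lev1_par x : lev x = 1 -> par x = s.
Proof. by rewrite /lev /par; case: (x == s) => //; case: (e s x). Qed.

Lemma lev2_ch x : lev x = 2 -> ch x = 0.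
Proof.
move=> l2; apply/eqP; rewrite cards_eq0; apply/eqP/setP => y; rewrite !inE.
apply/negbTE/negP => /andP[xy /eqP py].
have ys : y != s.
  apply/eqP => ys; subst y; rewrite par_s in py; subst x; by rewrite /lev eqxx in l2.
have [_ l] := par_spec ys; rewrite py l2 in l.
by have := lev_le2 y; lia.
Qed.


Lemma odd_case (Sdeg : \sum_x deg e x = 2 * (#|T| + 1))
  (odd_deg : forall x, odd (deg e x))
  (Supp : forall x x' a b, deg e x = 1 -> deg e x' = 1 -> e x a -> e x' b -> a != b -> e a b) :
  False.
Proof.
have S4 := sum_ntn Sdeg.
have Q1 : forall w, odd #|ntn w| -> lev w = 1 /\ exists c0, deg e c0 = 1 /\ e c0 w.
  move=> w ow.
  have ws : w != s by apply: contraTneq ow => ->; rewrite ntn_s cards0.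
  have dw := deg_split w; rewrite ws in dw.
  have odw := odd_deg w; rewrite dw !oddD /= in odw.
  have lw : lev w = 1.
    have := lev_le2 w; have := lev0 w; rewrite (negbTE ws).
    case Lw: (lev w) => [|[|[|]]] // _ _.
    by rewrite lev2_ch // /= ow in odw.
  split => //.
  have : 0 < ch w by move: odw; rewrite ow; case: (ch w).
  case/card_gt0P => c0; rewrite inE => /andP[wc0 /eqP pc0].
  have c0s : c0 != s by apply/eqP => E; subst c0; rewrite par_s in pc0; rewrite pc0 eqxx in ws.
  have [_ lc0] := par_spec c0s; rewrite pc0 lw in lc0.
  have lc2 : lev c0 = 2 by have := lev_le2 c0; lia.
  have dc := deg_split c0; rewrite c0s lev2_ch // in dc.
  have odc := odd_deg c0; rewrite dc !oddD /= in odc.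
  case Ei: #|ntn c0| => [|k].
    by exists c0; rewrite dc Ei sym.
  exfalso.
  have wc : w != c0 by apply: contraTneq wc0 => ->; rewrite irr.
  have wn : w \notin ntn c0 by rewrite !inE pc0 eqxx !andbF.
  have n1 : w \notin c0 |: ntn c0 by rewrite in_setU1 negb_or wc wn.
  have := sum_sub (fun x => #|ntn x|) (w |: (c0 |: ntn c0)).
  rewrite S4 big_setU1 // big_setU1 ?ntn_irr //=.
  have := @sum_lb _ (fun x => #|ntn x|) (ntn c0) 1.
  rewrite mul1n Ei => /(_ _) H; have {}H := H (fun y yn => ltac:(apply/card_gt0P; exists c0; by rewrite -ntn_sym)).
  have w1 : 0 < #|ntn w| by move: ow; case: (#|ntn w|).
  rewrite Ei /= in odc.
  have k1 : 0 < k by move: odc; case: (k).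
  lia.
apply: (@comb T ntn ntn_sym ntn_irr S4) => u v ou ov uv.
have [lu [cu [dcu ecu]]] := Q1 u ou.
have [lv [cv [dcv ecv]]] := Q1 v ov.
have euv := Supp _ _ _ _ dcu dcv ecu ecv uv.
have vs : v != s by rewrite -lev0 lv.
have us : u != s by rewrite -lev0 lu.
by rewrite !inE euv (lev1_par lu) (lev1_par lv) eq_sym vs eq_sym us.
Qed.
End Tree.


Section Nb.
Variables (T : finType) (e : rel T).
Hypothesis sym : symmetric e.
Hypothesis irr : irreflexive e.

Definition Nb x (l : seq T) := forall w, e x w = (w \in l).

Lemma within_nb x l k y : Nb x l ->
  within e k.+1 x y = (x == y) || has (fun z => within e k z y) l.
Proof.
move=> H /=; congr orb; apply/existsP/hasP => [[z /andP[xz w]]|[z zl w]].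
  by exists z => //; rewrite -H.
by exists z; rewrite H zl.
Qed.

Lemma within1 x y : within e 1 x y = (x == y) || e x y.
Proof.
rewrite /=; congr orb; apply/existsP/idP => [[z /andP[xz /eqP <-]]//|xy].
by exists y; rewrite xy eqxx.
Qed.

Lemma withinS k x y : within e k.+1 x y = (x == y) || [exists z, e x z && within e k z y].
Proof. by []. Qed.

Lemma within_mono k x y : within e k x y -> within e k.+1 x y.
Proof.
elim: k x => [|k IH] x.
  by rewrite withinS /= => ->.
rewrite withinS [within _ k.+2 _ _]withinS.
case/orP=> [->//|/existsP[z /andP[xz w]]]; apply/orP; right.
by apply/existsP; exists z; rewrite xz (IH _ w).
Qed.

Lemma nb2_of x y z : deg e x = 2 -> e x y -> e x z -> y != z -> Nb x [:: y; z].
Proof.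
move=> d xy xz yz w.
have S : [set y; z] \subset N e x.
  by apply/subsetP => u; rewrite !inE => /orP[]/eqP->; rewrite ?xy ?xz.
have E : [set y; z] = N e x.
  by apply/eqP; rewrite eqEcard S /= cards2 yz; rewrite /deg in d; rewrite d.
have -> : e x w = (w \in N e x) by rewrite inE.
by rewrite -E !inE.
Qed.

Lemma nb_other x y : deg e x = 2 -> e x y -> exists z, [/\ z != y, e x z & Nb x [:: y; z]].
Proof.
move=> d xy.
have : 0 < #|N e x :\ y|.
  move: d; rewrite /deg (cardsD1 y) inE xy /=; lia.
case/card_gt0P=> z; rewrite !inE => /andP[zy xz].
by exists z; split => //; apply: nb2_of => //; rewrite eq_sym.
Qed.

Lemma sum_nb (A : zmodType) (f : T -> A) x l : Nb x l -> uniq l ->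
  (\sum_(u | e x u) f u)%R = (\sum_(u <- l) f u)%R.
Proof.
by move=> H U; rewrite big_uniq //; apply: eq_bigl => u; rewrite H.
Qed.

Lemma star2 c : (forall w, within e 1 c w) -> forall x y, within e 2 x y.
Proof.
move=> H x y.
case: (eqVneq c x) => [<-|cx]; first exact: within_mono.
have := H x; rewrite within1 (negbTE cx) /= => ex.
rewrite /=; apply/orP; right; apply/existsP; exists c; rewrite sym ex /=.
exact: H.
Qed.

End Nb.


Arguments within : simpl never.
Lemma within0 (T : finType) (e : rel T) x y : within e 0 x y = (x == y).
Proof. by []. Qed.

Ltac kill := repeat match goal with
 | H : is_true (?a != ?b) |- context [?a == ?b] => rewrite (negbTE H)
 | H : is_true (?a != ?b) |- context [?b == ?a] => rewrite (eq_sym b a) (negbTE H)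
 end.

Ltac imp_or := let H := fresh in move=> H; repeat (case/orP: H => H);
  first [by move: H | move/eqP: H => H; subst; rewrite ?eqxx ?orbT //].

Ltac expand := repeat match goal with H : Nb _ _ _ |- context [within _ (S _) _ _] =>
  rewrite (within_nb _ _ H) /= end; rewrite ?within0.

Lemma int_lin (x y z w u m : int) : (u + (y + 0) = m)%R -> (u + (x + 0) = m)%R ->
  (x + (y + (z + (w + 0))) = m)%R -> (z + (w + 0) = m)%R -> x = 0%R.
Proof. lia. Qed.

Lemma pig3 (X : eqType) (p q r x y z : X) : x \in [:: p; q; r] -> y \in [:: p; q; r] ->
  z \in [:: p; q; r] -> x != y -> x != z -> y != z -> p \in [:: x; y; z] /\ q \in [:: x; y; z].
Proof.
rewrite !inE.
by move=> /or3P[]/eqP-> /or3P[]/eqP-> /or3P[]/eqP->; rewrite ?eqxx //= ?orbT.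
Qed.

Section C.
Variables (T : finType) (e : rel T).
Hypothesis sym : symmetric e.
Hypothesis irr : irreflexive e.
Variable c : T.
Hypothesis d2 : forall x, x != c -> deg e x = 2.
Hypothesis D3 : forall x y, within e 3 x y.
Hypothesis NA : forall u v, e c u -> e c v -> ~~ e u v.

Lemma adj_neq x y : e x y -> x != y.
Proof. by apply: contraTneq => ->; rewrite irr. Qed.

Lemma Nb2 x y z : x != c -> e y x -> e x z -> y != z -> Nb e x [:: y; z].
Proof. by move=> xc yx xz yz; apply: nb2_of; [exact: d2 | rewrite sym | done | done]. Qed.

Lemma C1 a a' a'' b : e c a -> e c a' -> e c a'' -> a != a' -> a != a'' -> a' != a'' ->
  b != c -> e a b -> e a' b -> False.
Proof.
move=> ca ca' ca'' aa' aa'' a'a'' bc ab a'b.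
have ac : a != c by rewrite eq_sym adj_neq.
have a'c : a' != c by rewrite eq_sym adj_neq.
have a''c : a'' != c by rewrite eq_sym adj_neq.
have Na : Nb e a [:: c; b] by apply: Nb2; rewrite // eq_sym.
have Na' : Nb e a' [:: c; b] by apply: Nb2; rewrite // eq_sym.
have Nbb : Nb e b [:: a; a'] by apply: Nb2; rewrite // sym.
have a''c' : e a'' c by rewrite sym.
have [b'' [b''c a''b'' Na'']] := nb_other (d2 a''c) a''c'.
have cb'' : e c b'' = false by apply/negP => cb; have := NA ca'' cb; rewrite a''b''.
have ab'' : a != b''.
  by apply: contraTneq a''b'' => <-; rewrite (negbTE (NA ca'' ca)).
have a'b'' : a' != b''.
  by apply: contraTneq a''b'' => <-; rewrite (negbTE (NA ca'' ca')).
have bb'' : b != b''.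
  apply: contraTneq a''b'' => <-; rewrite sym Nbb !inE; kill; done.
have := D3 b b''.
rewrite (within_nb _ _ Nbb) /= (within_nb _ _ Na) (within_nb _ _ Na') /= !within1 cb'' Nbb !inE.
kill; done.
Qed.

Variables (a1 a2 a3 a4 : T).
Hypotheses (a12 : a1 != a2) (a13 : a1 != a3) (a14 : a1 != a4) (a23 : a2 != a3) (a24 : a2 != a4) (a34 : a3 != a4).
Hypothesis Nc : Nb e c [:: a1; a2; a3; a4].
Hypothesis dc : deg e c = 4.

Lemma evC : False.
Proof.
case: (pickP (fun p : T * T * T => [&& e c p.1.1, e c p.1.2, p.1.1 != p.1.2, e p.1.1 p.2, e p.1.2 p.2 & p.2 != c])).
  move=> [[u v] w] /and5P[cu cv uv uw /andP[vw wc]] /=.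
  have : 0 < #|N e c :\: [set u; v]|.
    rewrite cardsD.
    have : #|N e c :&: [set u; v]| <= 2.
      have -> : 2 = #|[set u; v]| by rewrite cards2 uv.
      by apply: subset_leq_card; apply: subsetIr.
    have := dc; rewrite /deg => -> H; rewrite subn_gt0; exact: leq_ltn_trans H _.
  case/card_gt0P => a''; rewrite !inE negb_or => /andP[/andP[a''u a''v] ca''].
  by apply: (C1 cu cv ca'' uv _ _ wc uw vw); rewrite eq_sym.
move=> NS.
have NSf : forall u v w, e c u -> e c v -> u != v -> e u w -> e v w -> w = c.
  move=> u v w cu cv uv uw vw; apply/eqP/negPn/negP => wc.
  by have := NS (u, v, w); rewrite /= cu cv uv uw vw wc.
have ca1 : e c a1 by rewrite Nc !inE eqxx.
have ca2 : e c a2 by rewrite Nc !inE eqxx ?orbT.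
have ca3 : e c a3 by rewrite Nc !inE eqxx ?orbT.
have ca4 : e c a4 by rewrite Nc !inE eqxx ?orbT.
have oth : forall a, e c a -> exists b, [/\ b != c, e a b & Nb e a [:: c; b]].
  move=> a ca; have ac : a != c by rewrite eq_sym adj_neq.
  have ac' : e a c by rewrite sym.
  by have [b [? ? ?]] := nb_other (d2 ac) ac'; exists b.
have [b1 [b1c a1b1 Na1]] := oth _ ca1.
have cb1 : e c b1 = false by apply/negP => cb; have := NA ca1 cb; rewrite a1b1.
have b1a1 : e b1 a1 by rewrite sym.
have [d1 [d1a1 b1d1 Nb1]] := nb_other (d2 b1c) b1a1.
have d1c : d1 != c by apply: contraTneq b1d1 => ->; rewrite sym cb1.
have d1b1 : e d1 b1 by rewrite sym.
have [y [yb1 d1y Nd1]] := nb_other (d2 d1c) d1b1.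
have yc : y != c.
  apply/eqP => E; subst y.
  have cd1 : e c d1 by rewrite sym.
  have a1d1 : a1 != d1 by rewrite eq_sym.
  by move: b1c; rewrite (NSf _ _ _ ca1 cd1 a1d1 a1b1 d1b1) eqxx.
have yd1 : e y d1 by rewrite sym.
have [z [zd1 yz Ny]] := nb_other (d2 yc) yd1.
have key : forall a b, e c a -> a != a1 -> e a b -> b != c -> b \in [:: d1; y; z].
  move=> a b ca aa1 ab bc.
  have bb1 : b1 != b.
    apply/eqP => E; subst b.
    by have := NSf _ _ _ ca ca1 aa1 ab a1b1; apply/eqP.
  have a1b : a1 != b by apply: contraTneq ab => <-; rewrite (negbTE (NA ca ca1)).
  have cb : e c b = false by apply/negP => cb; have := NA ca cb; rewrite ab.
  have := D3 b1 b.
  rewrite (within_nb _ _ Nb1) /= (within_nb _ _ Na1) (within_nb _ _ Nd1) /= !within1 cb Nb1 Ny !inE.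
  kill; rewrite /=.
  imp_or.
have [b2 [b2c a2b2 _]] := oth _ ca2.
have [b3 [b3c a3b3 _]] := oth _ ca3.
have [b4 [b4c a4b4 _]] := oth _ ca4.
have a2a1 : a2 != a1 by rewrite eq_sym.
have a3a1 : a3 != a1 by rewrite eq_sym.
have a4a1 : a4 != a1 by rewrite eq_sym.
have k2 := key _ _ ca2 a2a1 a2b2 b2c.
have k3 := key _ _ ca3 a3a1 a3b3 b3c.
have k4 := key _ _ ca4 a4a1 a4b4 b4c.
have bd : forall a a' b, e c a -> e c a' -> a != a' -> e a b -> e a' b -> b != c -> False.
  by move=> a a' b ca ca' aa' ab a'b bc; move: bc; rewrite (NSf _ _ _ ca ca' aa' ab a'b) eqxx.
have b23 : b2 != b3 by apply/eqP => E; subst b3; exact: (bd _ _ _ ca2 ca3 a23 a2b2 a3b3 b2c).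
have b24 : b2 != b4 by apply/eqP => E; subst b4; exact: (bd _ _ _ ca2 ca4 a24 a2b2 a4b4 b2c).
have b34 : b3 != b4 by apply/eqP => E; subst b4; exact: (bd _ _ _ ca3 ca4 a34 a3b3 a4b4 b3c).
have [H1 H2] := pig3 k2 k3 k4 b23 b24 b34.
have fromb : forall p, p \in [:: b2; b3; b4] -> exists a, e c a /\ e a p.
  by move=> p; rewrite !inE => /or3P[]/eqP->; [exists a2 | exists a3 | exists a4].
have [a [ca ad1]] := fromb _ H1.
have : a \in [:: b1; y] by rewrite -Nd1 sym.
rewrite !inE => /orP[]/eqP E; subst a; first by rewrite cb1 in ca.
have [a' [ca' a'y]] := fromb _ H2.
by have := NA ca' ca; rewrite a'y.
Qed.
End C.

Section AB.
Variables (T : finType) (e : rel T).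
Hypothesis sym : symmetric e.
Hypothesis irr : irreflexive e.
Variable c : T.
Hypothesis d2 : forall x, x != c -> deg e x = 2.
Hypothesis D3 : forall x y, within e 3 x y.
Hypothesis D2 : exists x y, ~~ within e 2 x y.
Hypothesis Z : A_vertex_magic int e.
Variables (a1 a2 a3 a4 : T).
Hypotheses (a12 : a1 != a2) (a13 : a1 != a3) (a14 : a1 != a4) (a23 : a2 != a3) (a24 : a2 != a4) (a34 : a3 != a4).
Hypothesis Nc : Nb e c [:: a1; a2; a3; a4].
Hypothesis e12 : e a1 a2.

Lemma evAB : graph_iso e M11.
Proof.
have ca1 : e c a1 by rewrite Nc !inE eqxx.
have ca2 : e c a2 by rewrite Nc !inE eqxx ?orbT.
have ca3 : e c a3 by rewrite Nc !inE eqxx ?orbT.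
have ca4 : e c a4 by rewrite Nc !inE eqxx ?orbT.
have a1c : a1 != c by rewrite eq_sym (adj_neq irr).
have a2c : a2 != c by rewrite eq_sym (adj_neq irr).
have a3c : a3 != c by rewrite eq_sym (adj_neq irr).
have a4c : a4 != c by rewrite eq_sym (adj_neq irr).
have Na1 : Nb e a1 [:: c; a2] by apply: (Nb2 sym d2); rewrite // eq_sym.
have Na2 : Nb e a2 [:: c; a1] by apply: (Nb2 sym d2 a2c ca2); rewrite 1?(sym a2 a1) // eq_sym.
have a3c' : e a3 c by rewrite sym.
have a4c' : e a4 c by rewrite sym.
have [b3 [b3c a3b3 Na3]] := nb_other (d2 a3c) a3c'.
have [b4 [b4c a4b4 Na4]] := nb_other (d2 a4c) a4c'.
case: (eqVneq b3 a4) => [Eb | b3a4].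
  subst b3.
  have Na4' : Nb e a4 [:: c; a3] by apply: (Nb2 sym d2 a4c ca4); rewrite 1?(sym a4 a3) // eq_sym.
  exfalso; case: D2 => x [y /negP]; apply; apply: (@star2 _ _ sym c) => w.
  move: (D3 c w); expand.
  imp_or.
have b3a1 : b3 != a1 by apply: contraTneq a3b3 => ->; rewrite sym Na1 !inE; kill.
have b3a2 : b3 != a2 by apply: contraTneq a3b3 => ->; rewrite sym Na2 !inE; kill.
have b3a3 : b3 != a3 by rewrite eq_sym (adj_neq irr).
have b4a1 : b4 != a1 by apply: contraTneq a4b4 => ->; rewrite sym Na1 !inE; kill.
have b4a2 : b4 != a2 by apply: contraTneq a4b4 => ->; rewrite sym Na2 !inE; kill.
have b4a4 : b4 != a4 by rewrite eq_sym (adj_neq irr).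
have b4a3 : b4 != a3 by apply: contraTneq a4b4 => ->; rewrite sym Na3 !inE; kill.
case: (eqVneq b3 b4) => [Eb | b34].
  subst b4; exfalso.
  have Nb3 : Nb e b3 [:: a3; a4] by apply: (Nb2 sym d2 b3c); rewrite // sym.
  case: Z => l [nz [mu Hmu]].
  have U1 : uniq [:: c; a2] by rewrite /= inE eq_sym a2c.
  have U2 : uniq [:: c; a1] by rewrite /= inE eq_sym a1c.
  have U3 : uniq [:: a1; a2; a3; a4] by rewrite /= !inE !negb_or; kill.
  have U4 : uniq [:: a3; a4] by rewrite /= inE a34.
  have H1 := Hmu a1; rewrite (sum_nb _ Na1 U1) !big_cons big_nil in H1.
  have H2 := Hmu a2; rewrite (sum_nb _ Na2 U2) !big_cons big_nil in H2.
  have H3 := Hmu c; rewrite (sum_nb _ Nc U3) !big_cons big_nil in H3.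
  have H4 := Hmu b3; rewrite (sum_nb _ Nb3 U4) !big_cons big_nil in H4.
  by move: (nz a1); rewrite (int_lin H1 H2 H3 H4) eqxx.
have b3a3' : e b3 a3 by rewrite sym.
have [d3 [d3a3 b3d3 Nb3]] := nb_other (d2 b3c) b3a3'.
case: (eqVneq d3 b4) => [Ed | d3b4]; last first.
  exfalso.
  have d3c : d3 != c by apply: contraTneq b3d3 => ->; rewrite sym Nc !inE; kill.
  have d3a1 : d3 != a1 by apply: contraTneq b3d3 => ->; rewrite sym Na1 !inE; kill.
  have d3a2 : d3 != a2 by apply: contraTneq b3d3 => ->; rewrite sym Na2 !inE; kill.
  have d3a4 : d3 != a4 by apply: contraTneq b3d3 => ->; rewrite sym Na4 !inE; kill.
  have d3b3 : d3 != b3 by rewrite eq_sym (adj_neq irr).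
  by have := D3 a1 d3; expand; kill.
subst d3.
have Nb4 : Nb e b4 [:: a4; b3] by apply: (Nb2 sym d2 b4c a4b4); rewrite 1?sym // eq_sym.
pose L := [:: c; a3; b3; b4; a4; a1; a2].
have U : uniq L by rewrite /= !inE !negb_or; kill.
have Cov : forall w, w \in L.
  by move=> w; move: (D3 c w); expand; rewrite -has_pred1 /=; imp_or.
pose g (w : T) : 'I_7 := inord (index w L).
pose h (i : 'I_7) := nth c L i.
have hg : cancel g h.
  by move=> w; rewrite /g /h inordK ?nth_index // -[7]/(size L) index_mem.
have gh : cancel h g.
  by move=> i; rewrite /g /h index_uniq // ?inord_val.
exists g; split; first by exists h.
move=> x y; rewrite -{2}(hg x) -{2}(hg y); move: (g x) (g y) => i j.
case: i => [[|[|[|[|[|[|[|//]]]]]]] Hi]; case: j => [[|[|[|[|[|[|[|//]]]]]]] Hj]; rewrite /h /=.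
all: first [rewrite Nc | rewrite Na3 | rewrite Nb3 | rewrite Nb4 | rewrite Na4 | rewrite Na1 | rewrite Na2].
all: rewrite !inE ?eqxx; kill; by [].
Qed.
End AB.


Lemma sumT_const (T : finType) k : \sum_(x : T) k = #|T| * k.
Proof. by rewrite -sum_nat_const; apply: eq_bigl => x; rewrite inE. Qed.

Unset Implicit Arguments.
Theorem theorem4p15 (T : finType) (e : rel T) :
  simple_graph e -> bicyclic e -> diameter_eq e 3 ->
  (group_vertex_magic e <-> graph_iso e M11).
Proof.
move=> [sym irr] [_ card] [D3 D2]; split; last exact: rev_dir.
move=> G.
have Sdeg : \sum_x deg e x = 2 * (#|T| + 1) by rewrite (handshake sym irr) card.
have par := parity G.
have [x0 [y0 nxy]] := D2.
have x0y0 : x0 != y0 by apply: contraNneq nxy => ->; rewrite withinS eqxx.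
have deg1 : forall x, 0 < deg e x.
  move=> x; have [y xy] : exists y, x != y.
    by case: (eqVneq x x0) => [->|]; [exists y0 | exists x0].
  have := D3 x y; rewrite withinS (negbTE xy) /= => /existsP[z /andP[xz _]].
  by apply/card_gt0P; exists z; rewrite inE.
have degle : forall x, deg e x <= #|T|.-1.
  move=> x; rewrite /deg -(cardC1 x); apply: subset_leq_card; apply/subsetP => y.
  by rewrite !inE; apply: contraTneq => ->; rewrite irr.
case: (boolP (odd (deg e x0))) => od.
  have oddall : forall x, odd (deg e x) by move=> x; rewrite (par x x0).
  case: (pickP (fun v => deg e v == 1)) => [v /eqP dv | none]; last first.
    exfalso.
    have le3 : forall x, 3 <= deg e x.
      move=> x; have := deg1 x; have := none x; have := oddall x.
      by case: (deg e x) => [|[|[|]]].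
    have H1 : \sum_(x : T) 3 <= \sum_x deg e x by apply: leq_sum => x _; exact: le3.
    have H2 : \sum_x deg e x <= \sum_(x : T) #|T|.-1 by apply: leq_sum => x _; exact: degle.
    rewrite !sumT_const Sdeg in H1 H2.
    have : #|T| <= 2 by lia.
    by move: H2; case: #|T| => [|[|[|]]].
  have nb1 : forall x a, deg e x = 1 -> e x a -> Nb e x [:: a].
    move=> x a dx xa; have /cards1P[a' Es] : #|N e x| == 1 by apply/eqP.
    have : a \in N e x by rewrite inE.
    rewrite Es inE => /eqP E; subst a'.
    move=> w; have -> : e x w = (w \in N e x) by rewrite inE.
    by rewrite Es !inE.
  have [s Ns] : exists s, Nb e v [:: s].
    have /cards1P[s Es] : #|N e v| == 1 by apply/eqP.
    exists s => w; have -> : e v w = (w \in N e v) by rewrite inE.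
    by rewrite Es !inE.
  have W2 : forall x, within e 2 s x.
    move=> x; have := D3 v x; rewrite (within_nb _ _ Ns) /= orbF.
    case/orP => [/eqP <-|//].
    by apply: within_mono; rewrite within1 sym Ns inE eqxx orbT.
  have Supp : forall x x' a b, deg e x = 1 -> deg e x' = 1 -> e x a -> e x' b -> a != b -> e a b.
    move=> x x' a b dx dx' xa x'b ab.
    have Nx := nb1 _ _ dx xa; have Nx' := nb1 _ _ dx' x'b.
    have := D3 x x'; rewrite (within_nb _ _ Nx) /= orbF.
    case/orP => [/eqP E | ].
      by subst x'; move: x'b; rewrite Nx inE => /eqP E; rewrite E eqxx in ab.
    rewrite withinS => /orP[/eqP E | /existsP[z /andP[az]]].
      subst a; have : e x' x by rewrite sym.
      by rewrite Nx' inE => /eqP E2; subst b; rewrite sym.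
    rewrite within1 => /orP[/eqP E | zx'].
      subst z; have : e x' a by rewrite sym.
      by rewrite Nx' inE => /eqP E2; rewrite E2 eqxx in ab.
    have : e x' z by rewrite sym.
    by rewrite Nx' inE => /eqP E2; subst z.
  by exfalso; exact: (odd_case sym irr W2 Sdeg oddall Supp).
have evall : forall x, ~~ odd (deg e x) by move=> x; rewrite (par x x0) od.
have deg2 : forall x, 2 <= deg e x.
  by move=> x; have := deg1 x; have := evall x; case: (deg e x) => [|[|]].
pose g x := deg e x - 2.
have Sg : \sum_x g x = 2.
  have : \sum_x deg e x = \sum_x g x + \sum_(x : T) 2.
    rewrite -big_split; apply: eq_bigr => x _; have := deg2 x; rewrite /g => H.
    change (deg e x = deg e x - 2 + 2); lia.
  rewrite sumT_const Sdeg; lia.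
case: (pickP (fun x => deg e x != 2)) => [c dc | none]; last first.
  exfalso; move: Sg; rewrite big1 // => x _; have := none x; rewrite /g /=.
  by move/negbFE/eqP ->.
have dc4 : deg e c = 4.
  have := sum_sub g [set c]; rewrite big_set1 Sg /g.
  by move: dc (evall c) (deg2 c); case: (deg e c) => [|[|[|[|[|n]]]]].
have d2 : forall x, x != c -> deg e x = 2.
  move=> x xc; have := sum_sub g [set c; x]; rewrite sum_set2 1?eq_sym // Sg /g dc4.
  have := deg2 x; lia.
have Z : A_vertex_magic int e by apply: G; exists 1%R.
have : size (enum (N e c)) = 4 by rewrite -cardE.
have Ue := enum_uniq (N e c).
have Me : forall w, e c w = (w \in enum (N e c)) by move=> w; rewrite mem_enum inE.
case: (enum (N e c)) Ue Me => [|a1 [|a2 [|a3 [|a4 [|? ?]]]]] //= Ue Nc _.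
move: Ue; rewrite !inE !negb_or => /and4P[/and3P[a12 a13 a14] /andP[a23 a24] a34 _].
have Pm : forall p q r t, (forall w, (w \in [:: a1; a2; a3; a4]) = (w \in [:: p; q; r; t])) ->
    Nb e c [:: p; q; r; t].
  by move=> p q r t H w; rewrite Nc H.
have a21 : a2 != a1 by rewrite eq_sym.
have a31 : a3 != a1 by rewrite eq_sym.
have a41 : a4 != a1 by rewrite eq_sym.
have a32 : a3 != a2 by rewrite eq_sym.
have a42 : a4 != a2 by rewrite eq_sym.
have a43 : a4 != a3 by rewrite eq_sym.
case: (boolP (e a1 a2)) => [e12|n12].
  exact: (evAB sym irr d2 D3 D2 Z a12 a13 a14 a23 a24 a34 Nc e12).
case: (boolP (e a1 a3)) => [e13|n13].
  by apply: (evAB sym irr d2 D3 D2 Z a13 a12 a14 a32 a34 a24 _ e13); apply: Pm => w; rewrite !inE; case: (w == a1); case: (w == a2); case: (w == a3); case: (w == a4).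
case: (boolP (e a1 a4)) => [e14|n14].
  by apply: (evAB sym irr d2 D3 D2 Z a14 a12 a13 a42 a43 a23 _ e14); apply: Pm => w; rewrite !inE; case: (w == a1); case: (w == a2); case: (w == a3); case: (w == a4).
case: (boolP (e a2 a3)) => [e23|n23].
  by apply: (evAB sym irr d2 D3 D2 Z a23 a21 a24 a31 a34 a14 _ e23); apply: Pm => w; rewrite !inE; case: (w == a1); case: (w == a2); case: (w == a3); case: (w == a4).
case: (boolP (e a2 a4)) => [e24|n24].
  by apply: (evAB sym irr d2 D3 D2 Z a24 a21 a23 a41 a43 a13 _ e24); apply: Pm => w; rewrite !inE; case: (w == a1); case: (w == a2); case: (w == a3); case: (w == a4).
case: (boolP (e a3 a4)) => [e34|n34].
  by apply: (evAB sym irr d2 D3 D2 Z a34 a31 a32 a41 a42 a12 _ e34); apply: Pm => w; rewrite !inE; case: (w == a1); case: (w == a2); case: (w == a3); case: (w == a4).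
exfalso.
have n21 : ~~ e a2 a1 by rewrite sym.
have n31 : ~~ e a3 a1 by rewrite sym.
have n41 : ~~ e a4 a1 by rewrite sym.
have n32 : ~~ e a3 a2 by rewrite sym.
have n42 : ~~ e a4 a2 by rewrite sym.
have n43 : ~~ e a4 a3 by rewrite sym.
have NA : forall u v, e c u -> e c v -> ~~ e u v.
  by move=> u v; rewrite !Nc !inE => /or4P[]/eqP-> /or4P[]/eqP->; rewrite ?irr.
exact: (evC sym irr d2 D3 NA a12 a13 a14 a23 a24 a34 Nc dc4).
Qed.
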